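(* Let $0<b<1$, $\omega\in\mathbb{R}$, $c\in\mathbb{R}$, $l\in\mathbb{N}$, $m\in\{-l,\dots,l\}\setminus\{0\}$, and let $Y_l^m\in\mathbb{E}_{l,m}$ be non-zero. Let $\psi_c(\varphi,\theta,t)=g(\theta)+c\lambda_{l,m}f(\theta)+Y_l^m(\varphi-ct,\theta)$ be the travelling-wave solution of the Euler equations \[ \left(\partial_t+\frac{1}{\cos\theta\,\rho(\theta)}\left[-\partial_\theta\psi\,\partial_\varphi+\partial_\varphi\psi\,\partial_\theta\right]\right)\left(\Delta\psi+\frac{2\omega\sin\theta}{\rho(\theta)}\right)=0 \] where $g,f\in C^{3,\alpha}\left(\left(-\frac{\pi}{2},\frac{\pi}{2}\right)\right)$ solve, respectively, $-\lambda_{l,m} g=\frac{1}{\cos\theta\,\rho}\left(\frac{\cos\theta}{\rho}g'\right)'+\frac{2\omega\sin\theta}{\rho}$ and $-\lambda_{l,m} f=\frac{1}{\cos\theta\,\rho}\left(\frac{\cos\theta}{\rho}f'\right)'+P(\theta)$ with $P(\theta)=\int_{-\pi/2}^{\theta}\cos s\,\rho(s)\,ds-\int_{-\pi/2}^{0}\cos s\,\rho(s)\,ds$. Then, for the given $Y_l^m$ and $c$, the zonal part $g+c\lambda_{l,m}f$ is unique up to an additive constant among $C^{3,\alpha}$ functions $h(\theta)$ with $\lim_{\theta\to\pm\pi/2}h'(\theta)=0$ for which $h(\theta)+Y_l^m(\varphi-ct,\theta)$ solves the Euler equations; hence the travelling-wave solution is unique in terms of its velocity field $U=J\operatorname{g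rad}\psi_c$.
   Context: The surface $\mathbb{S}^2$ denotes the biaxial ellipsoid with major axis $1$ and minor axis $b\in(0,1)$, parametrized by $(\varphi,\theta)\mapsto(\cos\varphi\cos\theta,\sin\varphi\cos\theta,b\sin\theta)$; functions are $2\pi$-periodic in $\varphi$. Write $\rho(\theta)=\sqrt{\sin^2\theta+b^2\cos^2\theta}$. The Laplace–Beltrami operator is $\Delta\psi=\frac{1}{\cos^2\theta}\partial_{\varphi\varphi}\psi+\frac{1}{\cos\theta\,\rho(\theta)}\partial_\theta\!\left(\frac{\cos\theta}{\rho(\theta)}\partial_\theta\psi\right)$. $\mathbb{E}_{l,m}$ is the $(l,m)$-th eigenspace of $-\Delta$ with eigenvalue $\lambda_{l,m}$; for $m\neq0$ it is assumed to have an orthonormal basis $\{y_1(\theta)e^{im\varphi},\,y_2(\theta)e^{-im\varphi}\}$ with smooth $y_1,y_2$. The velocity field is $U=J\operatorname{grad}\psi=\left(-\frac{1}{\rho}\partial_\theta\psi,\ \frac{1}{\cos\theta}\partial_\varphi\psi\right)$ in the orthonormal frame $\frac{1}{\cos\theta}\partial_\varphi,\ \frac{1}{\rho}\partial_\theta$. $C^{3,\alpha}$ is a Hölder space with exponent $\alpha\in(0,1)$. *)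

(* Defs.v *)
From Stdlib Require Import Reals Lra ZArith List.
From Coquelicot Require Import Coquelicot.
Open Scope R_scope.

Definition rho (b θ : R) : R := sqrt (sin θ ^ 2 + b ^ 2 * cos θ ^ 2).

Definition in_chart (θ : R) : Prop := - PI / 2 < θ < PI / 2.

Definition dphi (F : R -> R -> R) : R -> R -> R :=
  fun φ θ => Derive (fun x => F x θ) φ.
Definition dth (F : R -> R -> R) : R -> R -> R :=
  fun φ θ => Derive (fun y => F φ y) θ.

(* Laplace-Beltrami operator on the ellipsoid in (phi, theta) coordinates *)
Definition LB (b : R) (F : R -> R -> R) : R -> R -> R :=
  fun φ θ =>
    / (cos θ ^ 2) * dphi (dphi F) φ θ
    + / (cos θ * rho b θ) * Derive (fun y => cos y / rho b y * dth F φ y) θ.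

(* iterated partial derivatives: true = d/dphi, false = d/dtheta *)
Fixpoint iterD (w : list bool) (F : R -> R -> R) : R -> R -> R :=
  match w with
  | nil => F
  | cons d w' => (if d then dphi else dth) (iterD w' F)
  end.

Definition smooth_chart (F : R -> R -> R) : Prop :=
  forall (w : list bool) (φ θ : R), in_chart θ ->
    ex_derive (fun x => iterD w F x θ) φ /\
    ex_derive (fun y => iterD w F φ y) θ /\
    continuity_2d_pt (iterD w F) φ θ.

Definition periodic_phi (F : R -> R -> R) : Prop :=
  forall φ θ, F (φ + 2 * PI) θ = F φ θ.

Definition bounded_chart (F : R -> R -> R) : Prop :=
  exists M, forall φ θ, in_chart θ -> Rabs (F φ θ) <= M.

(* (real) eigenfunction of -Delta on the ellipsoid with eigenvalue lam:
   smooth in the chart, 2pi-periodic in phi, bounded (i.e. regular at the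
   poles), and -Delta Y = lam Y *)
Definition eigenfunction (b lam : R) (Y : R -> R -> R) : Prop :=
  smooth_chart Y /\ periodic_phi Y /\ bounded_chart Y /\
  forall φ θ, in_chart θ -> - LB b Y φ θ = lam * Y φ θ.

Definition mode_eig (b : R) (k : nat) (mu : R) : Prop :=
  exists y : R -> R, (exists θ, in_chart θ /\ y θ <> 0) /\
    eigenfunction b mu (fun φ θ => y θ * cos (INR k * φ)).

(* lam = lambda_{l,m}: |m| <= l and lam is the (l-|m|)-th (counting from 0)
   eigenvalue, in increasing order, among the mode-|m| eigenvalues *)
Definition eigval_lm (b : R) (l : nat) (m : Z) (lam : R) : Prop :=
  (Z.abs_nat m <= l)%nat /\ mode_eig b (Z.abs_nat m) lam /\
  exists s : list R, NoDup s /\ length s = (l - Z.abs_nat m)%nat /\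
    forall mu, In mu s <-> (mu < lam /\ mode_eig b (Z.abs_nat m) mu).

(* standing assumption: for m <> 0 the eigenspace of lambda_{l,m} is spanned by
   y1(theta) e^{i m phi}, y2(theta) e^{-i m phi}; for real functions: every real
   eigenfunction of eigenvalue lam is a(theta) cos(m phi) + c(theta) sin(m phi) *)
Definition eigenspace_pm_m (b : R) (m : Z) (lam : R) : Prop :=
  forall Z0 : R -> R -> R, eigenfunction b lam Z0 ->
    exists a c : R -> R, forall φ θ,
      Z0 φ θ = a θ * cos (IZR m * φ) + c θ * sin (IZR m * φ).

Definition in_E_lm (b : R) (m : Z) (lam : R) (Y : R -> R -> R) : Prop :=
  eigenfunction b lam Y /\
  exists a c : R -> R, forall φ θ,
    Y φ θ = a θ * cos (IZR m * φ) + c θ * sin (IZR m * φ).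

Definition C3alpha (α : R) (h : R -> R) : Prop :=
  (forall θ, in_chart θ ->
     ex_derive h θ /\ ex_derive (Derive_n h 1) θ /\ ex_derive (Derive_n h 2) θ) /\
  (exists M, forall θ, in_chart θ ->
     Rabs (h θ) <= M /\ Rabs (Derive_n h 1 θ) <= M /\
     Rabs (Derive_n h 2 θ) <= M /\ Rabs (Derive_n h 3 θ) <= M) /\
  (exists K, forall x y, in_chart x -> in_chart y ->
     Rabs (Derive_n h 3 x - Derive_n h 3 y) <= K * Rpower (Rabs (x - y)) α).

Definition Lzonal (b : R) (u : R -> R) (θ : R) : R :=
  / (cos θ * rho b θ) * Derive (fun y => cos y / rho b y * Derive u y) θ.

Definition Pfun (b θ : R) : R :=
  RInt (fun s => cos s * rho b s) (- PI / 2) θ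
  - RInt (fun s => cos s * rho b s) (- PI / 2) 0.

Definition euler_sol (b ω : R) (Ψ : R -> R -> R -> R) : Prop :=
  let q := fun φ θ t => LB b (fun x y => Ψ x y t) φ θ + 2 * ω * sin θ / rho b θ in
  forall φ θ t, in_chart θ ->
    Derive (fun s => q φ θ s) t
    + / (cos θ * rho b θ) *
      (- Derive (fun y => Ψ φ y t) θ * Derive (fun x => q x θ t) φ
       + Derive (fun x => Ψ x θ t) φ * Derive (fun y => q φ y t) θ) = 0.

(* velocity U = J grad psi in the orthonormal frame *)
Definition velocity (b : R) (Ψ : R -> R -> R -> R) (φ θ t : R) : R * R :=
  (- / rho b θ * Derive (fun y => Ψ φ y t) θ,
   / cos θ * Derive (fun x => Ψ x θ t) φ).

(* Main.v *)
Require Import Defs.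
From Stdlib Require Import Reals ZArith Lra Lia List Classical.
From Coquelicot Require Import Coquelicot.
Open Scope R_scope.

Lemma chart_cos : forall t, in_chart t -> 0 < cos t.
Proof. intros t [H1 H2]. apply cos_gt_0; lra. Qed.

Lemma chart_loc : forall t, in_chart t -> locally t in_chart.
Proof. intros t [H1 H2].
  assert (Hp: 0 < Rmin (t + PI/2) (PI/2 - t)) by (apply Rmin_pos; lra).
  exists (mkposreal _ Hp). intros y Hy. change (Rabs (y - t) < Rmin (t + PI/2) (PI/2 - t)) in Hy.
  apply Rabs_def2 in Hy. destruct Hy as [Ha Hb].
  pose proof (Rmin_l (t + PI/2) (PI/2 - t)). pose proof (Rmin_r (t + PI/2) (PI/2 - t)).
  split; lra. Qed.

Lemma rho_pos : forall b t, 0 < b < 1 -> 0 < rho b t.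
Proof. intros b t Hb. unfold rho. apply sqrt_lt_R0.
  pose proof (sin2_cos2 t). unfold Rsqr in H.
  assert (0 < b^2) by nra. assert (b^2 < 1) by nra.
  nra. Qed.

Inductive ex := ECst (r:R) | ESin | ECos | ESec | ERho | EIRho | EAdd (e1 e2: ex) | EMul (e1 e2: ex).
Fixpoint ev (b:R) (e:ex) (t:R) : R := match e with
 | ECst r => r | ESin => sin t | ECos => cos t | ESec => / cos t | ERho => rho b t | EIRho => / rho b t
 | EAdd e1 e2 => ev b e1 t + ev b e2 t | EMul e1 e2 => ev b e1 t * ev b e2 t end.
Fixpoint dv (b:R) (e:ex) : ex := match e with
 | ECst _ => ECst 0 | ESin => ECos | ECos => EMul (ECst (-1)) ESin
 | ESec => EMul ESin (EMul ESec ESec)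
 | ERho => EMul (ECst (1 - b^2)) (EMul ESin (EMul ECos EIRho))
 | EIRho => EMul (ECst (-(1-b^2))) (EMul ESin (EMul ECos (EMul EIRho (EMul EIRho EIRho))))
 | EAdd e1 e2 => EAdd (dv b e1) (dv b e2)
 | EMul e1 e2 => EAdd (EMul (dv b e1) e2) (EMul e1 (dv b e2)) end.

Lemma ev_deriv b e t : 0 < b < 1 -> in_chart t -> is_derive (ev b e) t (ev b (dv b e) t).
Proof.
  intros Hb Ht. pose proof (chart_cos t Ht) as Hc. pose proof (rho_pos b t Hb) as Hr.
  assert (Hs: 0 < sin t ^ 2 + b ^ 2 * cos t ^ 2).
  { pose proof (rho_pos b t Hb). unfold rho in H. 
    destruct (Rle_lt_dec (sin t ^ 2 + b ^ 2 * cos t ^ 2) 0) as [H'|H']; auto.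
    rewrite sqrt_neg_0 in H; lra. }
  induction e; simpl.
  - auto_derive; auto.
  - auto_derive; auto. ring.
  - eapply is_derive_ext. { intro; reflexivity. } auto_derive; auto. ring.
  - auto_derive. lra. field. lra.
  - unfold rho. auto_derive. lra. replace (sqrt _) with (rho b t) by (unfold rho; f_equal; ring). change (sqrt (sin t ^ 2 + b ^ 2 * cos t ^ 2)) with (rho b t). field. lra.
  - unfold rho. auto_derive. split. lra. split; auto. fold (rho b t). apply Rgt_not_eq. exact Hr.
    replace (sqrt _) with (rho b t) by (unfold rho; f_equal; ring). change (sqrt (sin t ^ 2 + b ^ 2 * cos t ^ 2)) with (rho b t). field. lra.
  - apply (is_derive_plus (ev b e1) (ev b e2)); auto.
  - eapply is_derive_ext. { intro; reflexivity. }
    eapply is_derive_ext_loc; [| apply (is_derive_mult (ev b e1) (ev b e2)); auto].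
    + apply filter_forall; intro; reflexivity.
    + intros; apply Rmult_comm.
Qed.

Lemma ev_ex b e t : 0 < b < 1 -> in_chart t -> ex_derive (ev b e) t.
Proof. intros. eexists. apply ev_deriv; auto. Qed.

Lemma is_derive_cont f x d : is_derive f x d -> continuity_pt f x.
Proof. intro H. apply continuity_pt_filterlim. refine (ex_derive_continuous (K:=R_AbsRing) (V:=R_NormedModule) f x _). eexists; eauto. Qed.

Lemma ev_cont b e t : 0 < b < 1 -> in_chart t -> continuity_pt (ev b e) t.
Proof. intros. eapply is_derive_cont. apply ev_deriv; auto. Qed.

Lemma abs_le_inv x y : Rabs x <= y -> -y <= x <= y.
Proof. unfold Rabs; destruct (Rcase_abs x); lra. Qed.

Lemma is_derive_eq (f : R -> R) x l l' : is_derive f x l -> l = l' -> is_derive f x l'.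
Proof. intros H ->; exact H. Qed.

Lemma is_derive_mul f g x df dg : is_derive f x df -> is_derive g x dg ->
  is_derive (fun y => f y * g y) x (df * g x + f x * dg).
Proof. intros. apply (is_derive_mult f g); auto. intros; apply Rmult_comm. Qed.

Lemma const_of_deriv0 D x y : (forall z, Rmin x y <= z <= Rmax x y -> is_derive D z 0) -> D x = D y.
Proof. intros H. destruct (MVT_gen D x y (fun _ => 0)) as [c [_ Hc]].
  - intros z Hz. apply H; lra.
  - intros z Hz. eapply is_derive_cont. apply H; auto.
  - lra. Qed.

Lemma const_isolated D x0 d : 0 < d ->
  (forall z, z <> x0 -> Rabs (z - x0) < d -> is_derive D z 0) -> continuity_pt D x0 ->
  forall z, Rabs (z - x0) < d -> D z = D x0.
Proof. intros Hd H Hc z Hz.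
  destruct (MVT_gen D x0 z (fun _ => 0)) as [c [_ Hc']].
  - intros y Hy. apply H.
    + intro; subst. unfold Rmin, Rmax in Hy; destruct (Rle_dec x0 z); lra.
    + apply Rabs_def2 in Hz. apply Rabs_def1; unfold Rmin, Rmax in Hy; destruct (Rle_dec x0 z); lra.
  - intros y Hy. destruct (Req_dec y x0). subst; auto. eapply is_derive_cont. apply H; auto.
    apply Rabs_def2 in Hz. apply Rabs_def1; unfold Rmin, Rmax in Hy; destruct (Rle_dec x0 z); lra.
  - lra. Qed.

Lemma deriv0_isolated D x0 d : 0 < d ->
  (forall z, z <> x0 -> Rabs (z - x0) < d -> is_derive D z 0) -> continuity_pt D x0 ->
  is_derive D x0 0.
Proof. intros Hd H Hc.
  apply (is_derive_ext_loc (fun _ => D x0)).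
  - exists (mkposreal d Hd). intros y Hy. change (Rabs (y - x0) < d) in Hy.
    symmetry. apply (const_isolated D x0 d); auto.
  - apply (is_derive_const (D x0) x0). Qed.

Lemma gronwall (E dE : R -> R) x0 x1 C :
  (forall z, Rmin x0 x1 <= z <= Rmax x0 x1 -> 0 <= E z /\ is_derive E z (dE z) /\ Rabs (dE z) <= C * E z) ->
  E x0 = 0 -> E x1 = 0.
Proof. intros H H0.
  assert (Hx1 : Rmin x0 x1 <= x1 <= Rmax x0 x1) by (unfold Rmin, Rmax; destruct (Rle_dec x0 x1); lra).
  assert (HE1 : 0 <= E x1) by (apply H; auto).
  destruct (Rle_dec x0 x1) as [Hle|Hlt].
  - destruct (MVT_gen (fun z => E z * exp (- C * z)) x0 x1 (fun z => dE z * exp (-C*z) - C * E z * exp (-C * z))) as [c [Hcr Hc]].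
    + intros z Hz. destruct (H z) as [_ [Hd _]]; [lra|].
      assert (is_derive (fun z => exp (-C*z)) z (- C * exp (-C*z))) by (auto_derive; auto; ring).
      pose proof (is_derive_mul _ _ _ _ _ Hd H1). eapply is_derive_eq; [exact H2|]. simpl; ring.
    + intros z Hz. destruct (H z) as [_ [Hd _]]; [lra|]. eapply is_derive_cont.
      apply is_derive_mul. exact Hd. auto_derive; auto.
    + rewrite H0 in Hc. destruct (H c) as [Hc0 [_ Hcb]]; [lra|].
      apply abs_le_inv in Hcb.
      pose proof (exp_pos (-C*c)). pose proof (exp_pos (-C*x1)).
      assert (E x1 * exp (- C * x1) <= 0).
      { rewrite Rmult_0_l, Rminus_0_r in Hc. rewrite Hc. 
        apply Rmult_le_0_r; [|lra]. rewrite <- Rmult_minus_distr_r. apply Rmult_le_0_r; lra. }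
      nra.
  - destruct (MVT_gen (fun z => E z * exp (C * z)) x0 x1 (fun z => dE z * exp (C*z) + C * E z * exp (C * z))) as [c [Hcr Hc]].
    + intros z Hz. destruct (H z) as [_ [Hd _]]; [lra|].
      assert (is_derive (fun z => exp (C*z)) z (C * exp (C*z))) by (auto_derive; auto; ring).
      pose proof (is_derive_mul _ _ _ _ _ Hd H1). eapply is_derive_eq; [exact H2|]. simpl; ring.
    + intros z Hz. destruct (H z) as [_ [Hd _]]; [lra|]. eapply is_derive_cont.
      apply is_derive_mul. exact Hd. auto_derive; auto.
    + rewrite H0 in Hc. destruct (H c) as [Hc0 [_ Hcb]]; [lra|].
      apply abs_le_inv in Hcb.
      pose proof (exp_pos (C*c)). pose proof (exp_pos (C*x1)).
      assert (E x1 * exp (C * x1) <= 0).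
      { rewrite Rmult_0_l, Rminus_0_r in Hc.
        assert (dE c * exp (C * c) + C * E c * exp (C * c) >= 0).
        { rewrite <- Rmult_plus_distr_r. apply Rle_ge, Rmult_le_pos; lra. }
        nra. }
      nra.
Qed.

Lemma chart_between x0 x1 z : in_chart x0 -> in_chart x1 -> Rmin x0 x1 <= z <= Rmax x0 x1 -> in_chart z.
Proof. unfold in_chart, Rmin, Rmax; destruct (Rle_dec x0 x1); intros; lra. Qed.

Lemma abs2uv u v : Rabs (2*u*v) <= u*u + v*v.
Proof. pose proof (Rle_0_sqr (u - v)); pose proof (Rle_0_sqr (u + v)); unfold Rsqr in *. unfold Rabs; destruct (Rcase_abs (2*u*v)); nra. Qed.

Lemma ode_uc b (w Q : R -> R) x0 x1 : 0 < b < 1 ->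
 (forall t, in_chart t -> ex_derive w t /\ is_derive (fun y => cos y / rho b y * Derive w y) t (Q t * w t)) ->
 (forall t, in_chart t -> continuity_pt Q t) ->
 in_chart x0 -> in_chart x1 -> w x0 = 0 -> Derive w x0 = 0 -> w x1 = 0.
Proof.
  intros Hb Hw HQ H0 H1 Hw0 Hd0.
  set (P := fun y => cos y / rho b y * Derive w y).
  set (E := fun y => w y * w y + P y * P y).
  set (k := fun y => ev b (EMul ERho ESec) y + Rabs (Q y)).
  destruct (continuity_ab_maj k (Rmin x0 x1) (Rmax x0 x1)) as [Mx [HMx HMr]].
  { apply Rmin_Rmax. }
  { intros c Hc. pose proof (chart_between _ _ _ H0 H1 Hc) as Hcc. unfold k.
    apply continuity_pt_plus. apply ev_cont; auto.
    apply (continuity_pt_comp Q Rabs). auto. apply Rcontinuity_abs. }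
  assert (HE : E x1 = 0).
  { apply (gronwall E (fun z => 2 * w z * Derive w z + 2 * P z * (Q z * w z)) x0 x1 (k Mx)).
    - intros z Hz. pose proof (chart_between _ _ _ H0 H1 Hz) as Hzc.
      destruct (Hw z Hzc) as [Hex HP].
      pose proof (chart_cos z Hzc). pose proof (rho_pos b z Hb).
      split; [unfold E; nra|]. split.
      + unfold E. eapply is_derive_eq.
        apply (is_derive_plus (fun y => w y * w y) (fun y => P y * P y)).
        apply is_derive_mul; apply Derive_correct; auto.
        apply is_derive_mul; exact HP.
        simpl. unfold plus; simpl. ring.
      + assert (Hkz : k z <= k Mx) by (apply HMx; auto).
        assert (HE0 : 0 <= E z) by (unfold E; nra).
        apply Rle_trans with (k z * E z); [| apply Rmult_le_compat_r; auto].
        assert (HD : Derive w z = (rho b z / cos z) * P z) by (unfold P; field; lra).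
        eapply Rle_trans. apply Rabs_triang.
        rewrite HD.
        replace (2 * w z * (rho b z / cos z * P z)) with ((rho b z / cos z) * (2 * w z * P z)) by ring.
        replace (2 * P z * (Q z * w z)) with (Q z * (2 * P z * w z)) by ring.
        rewrite (Rabs_mult (rho b z / cos z)), (Rabs_mult (Q z)).
        rewrite (Rabs_right (rho b z / cos z)).
        2:{ apply Rle_ge. unfold Rdiv. apply Rmult_le_pos. lra. left; apply Rinv_0_lt_compat; lra. }
        unfold k, E; simpl.
        pose proof (abs2uv (w z) (P z)). pose proof (abs2uv (P z) (w z)).
        pose proof (Rabs_pos (Q z)).
        assert (0 <= rho b z * / cos z) by (apply Rmult_le_pos; [lra| left; apply Rinv_0_lt_compat; lra]).
        unfold Rdiv. nra.
    - unfold E, P. rewrite Hw0, Hd0. ring. }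
  unfold E in HE. nra.
Qed.

Ltac eta_fix := repeat match goal with |- context [Derive (fun x => ?g x) ?y] => change (Derive (fun x => g x) y) with (Derive g y) end.

Fixpoint allf (w : list bool) : bool := match w with nil => true | cons d w' => negb d && allf w' end.

Lemma iterD_zonal (v : R -> R) w : forall x y,
  iterD w (fun _ y => v y) x y = if allf w then Derive_n v (length w) y else 0.
Proof.
  induction w as [|d w IH]; intros x y; simpl; auto.
  destruct d; simpl.
  - unfold dphi. rewrite (Derive_ext _ (fun _ => if allf w then Derive_n v (length w) y else 0)).
    apply Derive_const. intro; apply IH.
  - unfold dth. rewrite (Derive_ext _ (fun y => if allf w then Derive_n v (length w) y else 0)).
    destruct (allf w); auto. apply Derive_const. intro; apply IH.
Qed.

Lemma eig_zonal b lam (v : R -> R) : 0 < b < 1 ->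
  (forall n t, in_chart t -> ex_derive (Derive_n v n) t) ->
  (exists M, forall t, in_chart t -> Rabs (v t) <= M) ->
  (forall t, in_chart t -> - Lzonal b v t = lam * v t) ->
  eigenfunction b lam (fun _ y => v y).
Proof.
  intros Hb Hs [M HM] He. split; [|split; [|split]].
  - intros w x y Hy. split; [|split].
    + apply (ex_derive_ext (fun _ => if allf w then Derive_n v (length w) y else 0)).
      intro; symmetry; apply iterD_zonal. apply ex_derive_const.
    + apply (ex_derive_ext (fun y => if allf w then Derive_n v (length w) y else 0)).
      intro; symmetry; apply iterD_zonal. destruct (allf w). apply Hs; auto. apply ex_derive_const.
    + intro eps. 
      destruct (allf w) eqn:Ha.
      * assert (Hc : continuity_pt (Derive_n v (length w)) y).
        { apply continuity_pt_filterlim. refine (ex_derive_continuous (K:=R_AbsRing) (V:=R_NormedModule) _ y _). apply Hs; auto. }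
        destruct (proj1 (continuity_pt_locally _ _) Hc eps) as [d Hd].
        exists d. intros u u' _ Hu'. rewrite !iterD_zonal, Ha. apply Hd. exact Hu'.
      * exists (mkposreal 1 Rlt_0_1). intros u u' _ _. rewrite !iterD_zonal, Ha.
        rewrite Rminus_0_r, Rabs_R0. apply cond_pos.
  - intros x y; reflexivity.
  - exists M. intros; simpl; auto.
  - intros x y Hy. rewrite <- He by auto. unfold LB, Lzonal. f_equal.
    unfold dphi at 1. rewrite (Derive_ext _ (fun _ => 0)). rewrite Derive_const.
    unfold dth. rewrite Rmult_0_r, Rplus_0_l. reflexivity. intro t. unfold dphi. apply Derive_const.
Qed.

Lemma zonal_zero b m lam (v : R -> R) : m <> 0%Z -> eigenspace_pm_m b m lam ->
  eigenfunction b lam (fun _ y => v y) -> forall t, v t = 0.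
Proof.
  intros Hm Hsp He t. destruct (Hsp _ He) as [A [C HAC]].
  assert (HM : IZR m <> 0) by (apply not_0_IZR; auto).
  pose proof (HAC 0 t) as H0. pose proof (HAC (PI / IZR m) t) as H1.
  rewrite Rmult_0_r, cos_0, sin_0 in H0.
  replace (IZR m * (PI / IZR m)) with PI in H1 by (field; auto).
  rewrite cos_PI, sin_PI in H1. lra.
Qed.

Lemma lam_nonzero b m lam : 0 < b < 1 -> m <> 0%Z -> eigenspace_pm_m b m lam -> lam <> 0.
Proof.
  intros Hb Hm Hsp Hl. subst lam.
  assert (H : eigenfunction b 0 (fun _ _ => 1)).
  { apply (eig_zonal b 0 (fun _ => 1)); auto.
    - intros [|n] t _. apply ex_derive_const.
      apply (ex_derive_ext (fun _ => 0)). intro; symmetry; apply Derive_n_const. apply ex_derive_const.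
    - exists 1. intros; rewrite Rabs_R1; lra.
    - intros t _. unfold Lzonal. rewrite (Derive_ext _ (fun _ => 0)). rewrite Derive_const. ring.
      intro y. rewrite Derive_const. ring. }
  pose proof (zonal_zero b m 0 (fun _ => 1) Hm Hsp H 0). simpl in H0. lra.
Qed.

Lemma loc_chart (P : R -> Prop) t : in_chart t -> (forall y, in_chart y -> P y) -> locally t P.
Proof. intros Ht H. eapply filter_imp; [| apply chart_loc; eauto]. exact H. Qed.

Lemma smooth_boot b (v : R -> R) (A B : ex) : 0 < b < 1 ->
 (forall t, in_chart t -> ex_derive v t /\ ex_derive (Derive v) t /\
     Derive (Derive v) t = ev b A t * Derive v t + ev b B t * v t) ->
 forall n t, in_chart t -> ex_derive (Derive_n v n) t.
Proof.
  intros Hb Hv.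
  assert (Hcomb : forall al be t, in_chart t -> is_derive (fun y => ev b al y * v y + ev b be y * Derive v y) t
     (ev b (EAdd (dv b al) (EMul be B)) t * v t + ev b (EAdd al (EAdd (dv b be) (EMul be A))) t * Derive v t)).
  { intros al be t Ht. destruct (Hv t Ht) as [H1 [H2 H3]].
    eapply is_derive_eq.
    apply (is_derive_plus (fun y => ev b al y * v y) (fun y => ev b be y * Derive v y)).
    apply is_derive_mul. apply ev_deriv; auto. apply Derive_correct; auto.
    apply is_derive_mul. apply ev_deriv; auto. apply Derive_correct; auto.
    simpl. rewrite H3. unfold plus; simpl. ring. }
  assert (Hcl : forall n, exists al be, forall t, in_chart t -> Derive_n v n t = ev b al t * v t + ev b be t * Derive v t).
  { induction n as [|n IH].
    - exists (ECst 1), (ECst 0). intros; simpl; ring.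
    - destruct IH as [al [be H]]. exists (EAdd (dv b al) (EMul be B)), (EAdd al (EAdd (dv b be) (EMul be A))).
      intros t Ht. change (Derive_n v (S n) t) with (Derive (Derive_n v n) t).
      rewrite (Derive_ext_loc _ (fun y => ev b al y * v y + ev b be y * Derive v y)).
      apply is_derive_unique. apply Hcomb; auto.
      apply loc_chart; auto. }
  intros n t Ht. destruct (Hcl n) as [al [be H]].
  apply (ex_derive_ext_loc (fun y => ev b al y * v y + ev b be y * Derive v y)).
  apply loc_chart; auto. intros; symmetry; auto.
  eexists. apply Hcomb; auto.
Qed.

Definition Yp (m : Z) (a cc : R -> R) (x θ : R) : R :=
  IZR m * (- a θ * sin (IZR m * x) + cc θ * cos (IZR m * x)).

Definition Qe (m : Z) (lam : R) : ex :=
  EAdd (EMul (ECst (IZR m ^ 2)) (EMul ESec ERho)) (EMul (ECst (- lam)) (EMul ECos ERho)).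

Lemma dphiF (m : Z) (a cc : R -> R) (Y : R -> R -> R) :
  (forall φ θ, Y φ θ = a θ * cos (IZR m * φ) + cc θ * sin (IZR m * φ)) ->
  forall K s x θ, Derive (fun x => K + Y (x - s) θ) x = Yp m a cc (x - s) θ.
Proof.
  intros HYf K s x θ.
  rewrite (Derive_ext _ (fun x => K + (a θ * cos (IZR m * (x - s)) + cc θ * sin (IZR m * (x - s))))).
  apply is_derive_unique. unfold Yp. auto_derive; auto. unfold Rminus; ring.
  intro; rewrite HYf; auto.
Qed.

Lemma dphiY (m : Z) (a cc : R -> R) (Y : R -> R -> R) :
  (forall φ θ, Y φ θ = a θ * cos (IZR m * φ) + cc θ * sin (IZR m * φ)) ->
  forall x θ, dphi Y x θ = Yp m a cc x θ.
Proof.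
  intros HYf x θ. unfold dphi. rewrite (Derive_ext _ (fun x => 0 + Y (x - 0) θ)).
  rewrite (dphiF m a cc Y HYf). rewrite Rminus_0_r; reflexivity.
  intro; rewrite Rminus_0_r, Rplus_0_l; reflexivity.
Qed.

Lemma ddYp (m : Z) (a cc : R -> R) (Y : R -> R -> R) :
  (forall φ θ, Y φ θ = a θ * cos (IZR m * φ) + cc θ * sin (IZR m * φ)) ->
  forall s x θ, Derive (fun x => Yp m a cc (x - s) θ) x = - IZR m ^ 2 * Y (x - s) θ.
Proof.
  intros HYf s x θ. rewrite HYf. apply is_derive_unique. unfold Yp. auto_derive; auto. unfold Rminus; ring.
Qed.

Lemma ddY (m : Z) (a cc : R -> R) (Y : R -> R -> R) :
  (forall φ θ, Y φ θ = a θ * cos (IZR m * φ) + cc θ * sin (IZR m * φ)) ->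
  forall x θ, dphi (dphi Y) x θ = - IZR m ^ 2 * Y x θ.
Proof.
  intros HYf x θ. unfold dphi at 1.
  rewrite (Derive_ext _ (fun x => Yp m a cc (x - 0) θ)).
  rewrite (ddYp m a cc Y HYf). rewrite Rminus_0_r; reflexivity.
  intro; rewrite (dphiY m a cc Y HYf). rewrite Rminus_0_r; reflexivity.
Qed.

Lemma slice_ode b lam (m : Z) (a cc : R -> R) (Y : R -> R -> R) : 0 < b < 1 ->
  eigenfunction b lam Y ->
  (forall φ θ, Y φ θ = a θ * cos (IZR m * φ) + cc θ * sin (IZR m * φ)) ->
  forall φ0 t, in_chart t -> ex_derive (fun y => Y φ0 y) t /\
    is_derive (fun y => cos y / rho b y * Derive (fun y => Y φ0 y) y) t (ev b (Qe m lam) t * Y φ0 t).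
Proof.
  intros Hb [Hsm [_ [_ Heig]]] HYf φ0 t Ht.
  destruct (Hsm nil φ0 t Ht) as [_ [H0 _]]. destruct (Hsm (false :: nil) φ0 t Ht) as [_ [H1 _]].
  simpl in H0, H1. split; auto.
  pose proof (chart_cos t Ht). pose proof (rho_pos b t Hb).
  assert (Hex : ex_derive (fun y => cos y / rho b y * dth Y φ0 y) t).
  { apply (ex_derive_mult (ev b (EMul ECos EIRho)) (dth Y φ0)). apply ev_ex; auto. exact H1. }
  pose proof (Derive_correct _ _ Hex) as HD.
  eapply is_derive_eq. exact HD.
  pose proof (Heig φ0 t Ht) as He. unfold LB in He. rewrite (ddY m a cc Y HYf) in He.
  set (X := Derive (fun y => cos y / rho b y * dth Y φ0 y) t) in *.
  assert (E : / (cos t * rho b t) * X = IZR m ^ 2 * / cos t ^ 2 * Y φ0 t - lam * Y φ0 t) by nra.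
  assert (HX : X = ev b (Qe m lam) t * Y φ0 t).
  { replace X with (cos t * rho b t * (/ (cos t * rho b t) * X)) by (field; repeat split; lra).
    rewrite E. unfold Qe; simpl. field; repeat split; lra. }
  exact HX.
Qed.


Lemma LB_F b lam (m : Z) (a cc : R -> R) (Y : R -> R -> R) (K : R -> R) s φ θ : 0 < b < 1 ->
  eigenfunction b lam Y ->
  (forall φ θ, Y φ θ = a θ * cos (IZR m * φ) + cc θ * sin (IZR m * φ)) ->
  in_chart θ ->
  (forall y, in_chart y -> ex_derive K y /\ ex_derive (Derive K) y) ->
  LB b (fun x y => K y + Y (x - s) y) φ θ = Lzonal b K θ - lam * Y (φ - s) θ.
Proof.
  intros Hb HY HYf Ht HK. pose proof HY as [Hsm [_ [_ Heig]]].
  assert (HL : LB b Y (φ - s) θ = - lam * Y (φ - s) θ) by (pose proof (Heig (φ - s) θ Ht); lra).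
  replace (Lzonal b K θ - lam * Y (φ - s) θ) with (Lzonal b K θ + LB b Y (φ - s) θ) by (rewrite HL; ring). unfold LB.
  assert (H1 : dphi (dphi (fun x y => K y + Y (x - s) y)) φ θ = dphi (dphi Y) (φ - s) θ).
  { rewrite (ddY m a cc Y HYf). unfold dphi at 1.
    rewrite (Derive_ext _ (fun x => Yp m a cc (x - s) θ)).
    apply (ddYp m a cc Y HYf). intro; cbv beta. unfold dphi. apply (dphiF m a cc Y HYf). }
  rewrite H1.
  rewrite (Derive_ext_loc _ (fun y => cos y / rho b y * Derive K y + cos y / rho b y * dth Y (φ - s) y)).
  2:{ apply loc_chart; auto. intros y Hy. unfold dth.
      destruct (HK y Hy) as [Hk1 _]. destruct (Hsm nil (φ - s) y Hy) as [_ [Hy1 _]]. simpl in Hy1.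
      rewrite (Derive_plus K (fun y => Y (φ - s) y)); auto. rewrite Rmult_plus_distr_l; reflexivity. }
  rewrite Derive_plus.
  - unfold Lzonal. ring.
  - apply (ex_derive_mult (ev b (EMul ECos EIRho)) (Derive K)). apply ev_ex; auto. apply HK; auto.
  - destruct (Hsm (false :: nil) (φ - s) θ Ht) as [_ [Hy2 _]]. simpl in Hy2.
    apply (ex_derive_mult (ev b (EMul ECos EIRho)) (dth Y (φ - s))). apply ev_ex; auto. exact Hy2.
Qed.

Definition pe : ex := EMul ECos EIRho.

Lemma Lzonal_exp b (u : R -> R) t : 0 < b < 1 -> in_chart t -> ex_derive (Derive u) t ->
  Lzonal b u t = / (cos t * rho b t) * (ev b (dv b pe) t * Derive u t + cos t / rho b t * Derive (Derive u) t).
Proof.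
  intros Hb Ht Hu. unfold Lzonal. f_equal.
  rewrite (Derive_mult (ev b pe) (Derive u)); auto.
  rewrite (is_derive_unique _ _ _ (ev_deriv b pe t Hb Ht)). reflexivity.
  apply ev_ex; auto.
Qed.

Lemma rho_cont_all b t : 0 < b < 1 -> is_derive (fun y => cos y * rho b y) t
   (- sin t * rho b t + cos t * ((1 - b^2) * sin t * cos t / rho b t)).
Proof.
  intros Hb. pose proof (rho_pos b t Hb) as Hr.
  assert (Hs: 0 < sin t ^ 2 + b ^ 2 * cos t ^ 2).
  { unfold rho in Hr. destruct (Rle_lt_dec (sin t ^ 2 + b ^ 2 * cos t ^ 2) 0) as [H'|H']; auto.
    rewrite sqrt_neg_0 in Hr; lra. }
  unfold rho. auto_derive. lra.
  replace (sqrt _) with (rho b t) by (unfold rho; f_equal; ring).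
  change (sqrt (sin t ^ 2 + b ^ 2 * cos t ^ 2)) with (rho b t). field. lra.
Qed.

Lemma Pfun_deriv b t : 0 < b < 1 -> is_derive (Pfun b) t (cos t * rho b t).
Proof.
  intros Hb. unfold Pfun.
  assert (Hc : forall z, continuous (fun s => cos s * rho b s) z).
  { intro z. apply continuity_pt_filterlim. eapply is_derive_cont. apply rho_cont_all; auto. }
  eapply is_derive_eq.
  apply (is_derive_plus (fun y => RInt (fun s => cos s * rho b s) (- PI / 2) y) (fun _ => - RInt (fun s => cos s * rho b s) (- PI / 2) 0)).
  apply (is_derive_RInt (fun s => cos s * rho b s) (fun y => RInt (fun s => cos s * rho b s) (- PI / 2) y) (- PI / 2)).
  - apply filter_forall. intro y. apply (RInt_correct (V:=R_CompleteNormedModule)). apply (ex_RInt_continuous (V:=R_CompleteNormedModule)). intros; apply Hc.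
  - apply Hc.
  - apply is_derive_const.
  - simpl. unfold plus, zero; simpl. ring.
Qed.

Lemma Z_ex b ω (h : R -> R) θ : 0 < b < 1 -> in_chart θ ->
  (forall y, in_chart y -> ex_derive h y /\ ex_derive (Derive h) y /\ ex_derive (Derive (Derive h)) y) ->
  ex_derive (fun y => Lzonal b h y + 2 * ω * sin y / rho b y) θ.
Proof.
  intros Hb Ht Hh.
  apply (ex_derive_ext_loc (fun y => ev b (EMul ESec EIRho) y * (ev b (dv b pe) y * Derive h y + ev b pe y * Derive (Derive h) y) + 2 * ω * ev b (EMul ESin EIRho) y)).
  - apply loc_chart; auto. intros y Hy. rewrite Lzonal_exp; auto. 2: apply Hh; auto.
    pose proof (chart_cos y Hy). pose proof (rho_pos b y Hb). simpl. unfold pe. simpl. field. repeat split; lra.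
  - destruct (Hh θ Ht) as [H1 [H2 H3]].
    assert (E1 := ev_ex b (EMul ESec EIRho) θ Hb Ht). assert (E2 := ev_ex b (dv b pe) θ Hb Ht).
    assert (E3 := ev_ex b pe θ Hb Ht). assert (E4 := ev_ex b (EMul ESin EIRho) θ Hb Ht).
    auto_derive. repeat split; auto.
Qed.

Lemma Derive_plus_const (F : R -> R) K x : Derive (fun y => F y + K) x = Derive F x.
Proof. unfold Derive. f_equal. apply Lim_ext. intro y. f_equal. ring. Qed.

Lemma nonzero_near (w : R -> R) (x0 l : R) : is_derive w x0 l -> l <> 0 -> w x0 = 0 ->
  exists d, 0 < d /\ forall z, z <> x0 -> Rabs (z - x0) < d -> w z <> 0.
Proof.
  intros H Hl Hw. apply is_derive_Reals in H.
  destruct (H (Rabs l) (Rabs_pos_lt _ Hl)) as [d Hd].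
  exists d. split. apply cond_pos. intros z Hz Hzd Hwz.
  assert (Hh : z - x0 <> 0) by lra.
  specialize (Hd (z - x0) Hh Hzd). replace (x0 + (z - x0)) with z in Hd by ring.
  rewrite Hwz, Hw in Hd. replace ((0 - 0) / (z - x0) - l) with (- l) in Hd by (field; auto).
  rewrite Rabs_Ropp in Hd. lra.
Qed.

Lemma chart_rad t : in_chart t -> exists d, 0 < d /\ forall z, Rabs (z - t) < d -> in_chart z.
Proof. intros Ht. destruct (chart_loc t Ht) as [e He]. exists e. split. apply cond_pos.
  intros z Hz. apply He. exact Hz. Qed.

Lemma chart0 : in_chart 0.
Proof. pose proof PI_RGT_0. unfold in_chart; lra. Qed.

Theorem theorem5
  (b ω c α : R) (l : nat) (m : Z) (lam : R)
  (Y : R -> R -> R) (g f : R -> R) :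
  0 < b < 1 ->
  0 < α < 1 ->
  m <> 0%Z ->
  eigval_lm b l m lam ->
  eigenspace_pm_m b m lam ->
  in_E_lm b m lam Y ->
  (exists φ θ, in_chart θ /\ Y φ θ <> 0) ->
  C3alpha α g ->
  C3alpha α f ->
  (forall θ, in_chart θ ->
     - lam * g θ = Lzonal b g θ + 2 * ω * sin θ / rho b θ) ->
  (forall θ, in_chart θ ->
     - lam * f θ = Lzonal b f θ + Pfun b θ) ->
  forall h : R -> R,
    C3alpha α h ->
    filterlim (Derive h) (at_left (PI / 2)) (locally 0) ->
    filterlim (Derive h) (at_right (- PI / 2)) (locally 0) ->
    euler_sol b ω (fun φ θ t => h θ + Y (φ - c * t) θ) ->
    (exists K : R, forall θ, in_chart θ -> h θ = g θ + c * lam * f θ + K) /\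
    (forall φ θ t, in_chart θ ->
       velocity b (fun φ' θ' t' => h θ' + Y (φ' - c * t') θ') φ θ t =
       velocity b (fun φ' θ' t' => g θ' + c * lam * f θ' + Y (φ' - c * t') θ') φ θ t).
Proof.
  intros Hb Hα Hm Hev Hsp HE Hnz Hg Hf Hgeq Hfeq h Hh Hl1 Hl2 Heul.
  destruct HE as [HY [a [cc HYf]]].
  assert (Hlam : lam <> 0) by (exact (lam_nonzero b m lam Hb Hm Hsp)).
  assert (HM : IZR m <> 0) by (apply not_0_IZR; auto).
  assert (Rh : forall y, in_chart y -> ex_derive h y /\ ex_derive (Derive h) y /\ ex_derive (Derive (Derive h)) y)
    by (intros y Hy; destruct Hh as [Hd _]; exact (Hd y Hy)).
  assert (Rg : forall y, in_chart y -> ex_derive g y /\ ex_derive (Derive g) y /\ ex_derive (Derive (Derive g)) y)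
    by (intros y Hy; destruct Hg as [Hd _]; exact (Hd y Hy)).
  assert (Rf : forall y, in_chart y -> ex_derive f y /\ ex_derive (Derive f) y /\ ex_derive (Derive (Derive f)) y)
    by (intros y Hy; destruct Hf as [Hd _]; exact (Hd y Hy)).
  set (Z := fun y => Lzonal b h y + 2 * ω * sin y / rho b y).
  assert (HZ : forall y, in_chart y -> ex_derive Z y) by (intros; apply Z_ex; auto).
  assert (Heq : forall φ θ, in_chart θ -> Yp m a cc φ θ * (lam * c * (cos θ * rho b θ) + lam * Derive h θ + Derive Z θ) = 0).
  { intros φ θ Hθ. pose proof (Heul φ θ 0 Hθ) as E. cbv zeta beta in E.
    assert (Rh2 : forall y, in_chart y -> ex_derive h y /\ ex_derive (Derive h) y) by (intros y Hy; destruct (Rh y Hy) as [? [? ?]]; auto).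
    assert (Hq : forall s x y, in_chart y -> LB b (fun x0 y0 => h y0 + Y (x0 - s) y0) x y + 2 * ω * sin y / rho b y
                   = Z y - lam * (a y * cos (IZR m * (x - s)) + cc y * sin (IZR m * (x - s)))).
    { intros s x y Hy. rewrite (LB_F b lam m a cc Y h s x y Hb HY HYf Hy Rh2). unfold Z. rewrite HYf. ring. }
    assert (T1 : Derive (fun s : R => LB b (fun x y : R => h y + Y (x - c * s) y) φ θ + 2 * ω * sin θ / rho b θ) 0
                 = lam * c * Yp m a cc (φ - c * 0) θ).
    { rewrite (Derive_ext _ (fun s => Z θ - lam * (a θ * cos (IZR m * (φ - c * s)) + cc θ * sin (IZR m * (φ - c * s))))).
      2:{ intro s. apply Hq; auto. }
      apply is_derive_unique. unfold Yp. auto_derive; auto. unfold Rminus; ring. }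
    assert (T2 : Derive (fun y : R => h y + Y (φ - c * 0) y) θ = Derive h θ + dth Y (φ - c * 0) θ).
    { destruct HY as [Hsm _]. destruct (Hsm nil (φ - c * 0) θ Hθ) as [_ [Hy1 _]]. simpl in Hy1.
      rewrite (Derive_plus h (fun y => Y (φ - c * 0) y)); auto. apply Rh; auto. }
    assert (T3 : Derive (fun x : R => LB b (fun x0 y : R => h y + Y (x0 - c * 0) y) x θ + 2 * ω * sin θ / rho b θ) φ
                 = - lam * Yp m a cc (φ - c * 0) θ).
    { rewrite (Derive_ext _ (fun x => Z θ - lam * (a θ * cos (IZR m * (x - c * 0)) + cc θ * sin (IZR m * (x - c * 0))))).
      2:{ intro s. apply Hq; auto. }
      apply is_derive_unique. unfold Yp. auto_derive; auto. unfold Rminus; ring. }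
    assert (T4 : Derive (fun x : R => h θ + Y (x - c * 0) θ) φ = Yp m a cc (φ - c * 0) θ) by apply (dphiF m a cc Y HYf).
    assert (T5 : Derive (fun y : R => LB b (fun x y0 : R => h y0 + Y (x - c * 0) y0) φ y + 2 * ω * sin y / rho b y) θ
                 = Derive Z θ - lam * dth Y (φ - c * 0) θ).
    { rewrite (Derive_ext_loc _ (fun y => Z y - lam * Y (φ - c * 0) y)).
      2:{ apply loc_chart; auto. intros y Hy. rewrite Hq; auto. rewrite HYf. reflexivity. }
      destruct HY as [Hsm _]. destruct (Hsm nil (φ - c * 0) θ Hθ) as [_ [Hy1 _]]. simpl in Hy1.
      rewrite Derive_minus; auto. rewrite Derive_scal. reflexivity.
      apply ex_derive_scal. exact Hy1. }
    rewrite T1, T2, T3, T4, T5 in E. clear T1 T2 T3 T4 T5.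
    replace (φ - c * 0) with φ in E by ring.
    pose proof (chart_cos θ Hθ). pose proof (rho_pos b θ Hb).
    match type of E with ?L = 0 => transitivity (cos θ * rho b θ * L) end.
    field. split; lra. rewrite E; ring. }
  set (D := fun y => lam * h y + Z y + c * lam * Pfun b y).
  assert (HD : forall θ, in_chart θ -> is_derive D θ (lam * c * (cos θ * rho b θ) + lam * Derive h θ + Derive Z θ)).
  { intros θ Hθ. eapply is_derive_eq.
    apply (is_derive_plus (fun y => lam * h y + Z y) (fun y => c * lam * Pfun b y)).
    apply (is_derive_plus (fun y => lam * h y) Z).
    apply is_derive_scal. apply Derive_correct. apply Rh; auto.
    apply Derive_correct. apply HZ; auto.
    apply is_derive_scal. apply Pfun_deriv; auto.
    simpl. unfold plus; simpl. ring. }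
  assert (Hd0 : forall θ, in_chart θ -> (a θ <> 0 \/ cc θ <> 0) -> is_derive D θ 0).
  { intros θ Hθ Hac. eapply is_derive_eq. apply HD; auto.
    destruct Hac as [Ha | Hc].
    - pose proof (Heq (PI / (2 * IZR m)) θ Hθ) as E. unfold Yp in E.
      replace (IZR m * (PI / (2 * IZR m))) with (PI / 2) in E by (field; auto).
      rewrite sin_PI2, cos_PI2 in E.
      apply Rmult_integral in E. destruct E as [E|E]; [|exact E].
      exfalso. apply Ha. apply (Rmult_eq_reg_l (- IZR m)); [|intro; apply HM; lra]. lra.
    - pose proof (Heq 0 θ Hθ) as E. unfold Yp in E. rewrite Rmult_0_r, sin_0, cos_0 in E.
      apply Rmult_integral in E. destruct E as [E|E]; [|exact E].
      exfalso. apply Hc. apply (Rmult_eq_reg_l (IZR m)); [|auto]. lra. }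
  assert (Key : forall φ0 θ, in_chart θ -> Y φ0 θ = 0 -> (exists x1, in_chart x1 /\ Y φ0 x1 <> 0) ->
            (forall z, in_chart z -> Y φ0 z <> 0 -> is_derive D z 0) -> is_derive D θ 0).
  { intros φ0 θ Hθ HY0 [x1 [Hx1 HY1]] Hz.
    pose proof (slice_ode b lam m a cc Y Hb HY HYf φ0) as Hso.
    assert (Hdn : Derive (fun y => Y φ0 y) θ <> 0).
    { intro Hd. apply HY1. apply (ode_uc b (fun y => Y φ0 y) (ev b (Qe m lam)) θ x1); auto.
      intros; apply ev_cont; auto. }
    destruct (nonzero_near (fun y => Y φ0 y) θ _ (Derive_correct _ _ (proj1 (Hso θ Hθ))) Hdn HY0) as [d1 [Hd1 Hn1]].
    destruct (chart_rad θ Hθ) as [d2 [Hd2 Hc2]].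
    apply (deriv0_isolated D θ (Rmin d1 d2)).
    - apply Rmin_pos; auto.
    - intros z Hzn Hzd. pose proof (Rmin_l d1 d2). pose proof (Rmin_r d1 d2).
      apply Hz. apply Hc2; lra. apply Hn1; auto; lra.
    - eapply is_derive_cont. apply HD; auto. }
  assert (Hall : forall θ, in_chart θ -> is_derive D θ 0).
  { intros θ Hθ. destruct (classic (a θ <> 0 \/ cc θ <> 0)) as [Hac|Hac].
    - apply Hd0; auto.
    - assert (Ha0 : a θ = 0) by (apply NNPP; intro; apply Hac; auto).
      assert (Hc0 : cc θ = 0) by (apply NNPP; intro; apply Hac; auto).
      assert (Ya : forall y, Y 0 y = a y) by (intro y; rewrite HYf, Rmult_0_r, cos_0, sin_0; ring).
      assert (Yc : forall y, Y (PI / (2 * IZR m)) y = cc y).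
      { intro y. rewrite HYf. replace (IZR m * (PI / (2 * IZR m))) with (PI / 2) by (field; auto).
        rewrite sin_PI2, cos_PI2; ring. }
      destruct (classic (exists x1, in_chart x1 /\ a x1 <> 0)) as [[x1 [Hx1 Hax]]|Hna].
      + apply (Key 0 θ Hθ). rewrite Ya; auto. exists x1; rewrite Ya; auto.
        intros z Hz Hyz. apply Hd0; auto. left; rewrite <- Ya; auto.
      + destruct (classic (exists x1, in_chart x1 /\ cc x1 <> 0)) as [[x1 [Hx1 Hcx]]|Hnc].
        * apply (Key (PI / (2 * IZR m)) θ Hθ). rewrite Yc; auto. exists x1; rewrite Yc; auto.
          intros z Hz Hyz. apply Hd0; auto. right; rewrite <- Yc; auto.
        * exfalso. destruct Hnz as [φ1 [θ1 [Ht1 Hy1]]]. apply Hy1. rewrite HYf.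
          assert (a θ1 = 0) by (apply NNPP; intro; apply Hna; eauto).
          assert (cc θ1 = 0) by (apply NNPP; intro; apply Hnc; eauto).
          rewrite H, H0; ring. }
  assert (Hconst : forall θ, in_chart θ -> D θ = D 0).
  { intros θ Hθ. apply const_of_deriv0. intros z Hz. apply Hall.
    apply (chart_between θ 0); auto. apply chart0. }
  set (K1 := D 0).
  set (v := fun y => h y - g y - c * lam * f y - K1 / lam).
  assert (Hv1 : forall t, in_chart t -> Derive v t = Derive h t - Derive g t - c * lam * Derive f t).
  { intros t Ht. destruct (Rh t Ht) as [? _]. destruct (Rg t Ht) as [? _]. destruct (Rf t Ht) as [? _].
    apply is_derive_unique. unfold v. auto_derive. repeat split; auto. eta_fix. ring. }
  assert (Hv2 : forall t, in_chart t -> Derive (Derive v) t = Derive (Derive h) t - Derive (Derive g) t - c * lam * Derive (Derive f) t).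
  { intros t Ht. destruct (Rh t Ht) as [_ [? _]]. destruct (Rg t Ht) as [_ [? _]]. destruct (Rf t Ht) as [_ [? _]].
    rewrite (Derive_ext_loc _ (fun y => Derive h y - Derive g y - c * lam * Derive f y)).
    apply is_derive_unique. auto_derive. repeat split; auto. eta_fix. ring.
    apply loc_chart; auto. }
  assert (Hvx : forall t, in_chart t -> ex_derive v t /\ ex_derive (Derive v) t).
  { intros t Ht. destruct (Rh t Ht) as [? [? _]]. destruct (Rg t Ht) as [? [? _]]. destruct (Rf t Ht) as [? [? _]].
    split. unfold v. auto_derive. repeat split; auto.
    apply (ex_derive_ext_loc (fun y => Derive h y - Derive g y - c * lam * Derive f y)).
    apply loc_chart; auto. intros; symmetry; auto.
    auto_derive. repeat split; auto. }
  assert (Hzon : forall t, in_chart t -> lam * v t + Lzonal b v t = 0).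
  { intros t Ht.
    assert (HLv : Lzonal b v t = Lzonal b h t - Lzonal b g t - c * lam * Lzonal b f t).
    { rewrite !Lzonal_exp; auto. rewrite Hv1, Hv2; auto. ring.
      apply Rf; auto. apply Rg; auto. apply Rh; auto. apply Hvx; auto. }
    pose proof (Hconst t Ht) as Ht'. fold K1 in Ht'. unfold D, Z in Ht'.
    pose proof (Hgeq t Ht). pose proof (Hfeq t Ht).
    rewrite HLv. unfold v.
    replace (Lzonal b h t) with (K1 - lam * h t - 2 * ω * sin t / rho b t - c * lam * Pfun b t) by lra.
    replace (Lzonal b g t) with (- lam * g t - 2 * ω * sin t / rho b t) by lra.
    replace (Lzonal b f t) with (- lam * f t - Pfun b t) by lra.
    field. split; [pose proof (rho_pos b t Hb); lra | auto]. }
  assert (Hv0 : forall t, v t = 0).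
  { apply (zonal_zero b m lam v Hm Hsp).
    apply eig_zonal; auto.
    - apply (smooth_boot b v (EMul (ECst (-1)) (EMul (dv b pe) (EMul ERho ESec))) (EMul (ECst (- lam)) (EMul ERho ERho)) Hb).
      intros t Ht. destruct (Hvx t Ht) as [Hx1 Hx2]. split; auto. split; auto.
      pose proof (Hzon t Ht) as Hz. rewrite Lzonal_exp in Hz; auto.
      pose proof (chart_cos t Ht). pose proof (rho_pos b t Hb).
      set (X := Derive (Derive v) t) in *.
      assert (E : / (cos t * rho b t) * (cos t / rho b t * X) = - lam * v t - / (cos t * rho b t) * (ev b (dv b pe) t * Derive v t)) by nra.
      replace X with (rho b t * rho b t * (/ (cos t * rho b t) * (cos t / rho b t * X))) by (field; repeat split; lra).
      rewrite E. simpl. field. repeat split; lra.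
    - destruct Hh as [_ [[Mh HMh] _]]. destruct Hg as [_ [[Mg HMg] _]]. destruct Hf as [_ [[Mf HMf] _]].
      exists (Mh + Mg + Rabs (c * lam) * Mf + Rabs (K1 / lam)). intros t Ht. unfold v.
      destruct (HMh t Ht) as [H1 _]. destruct (HMg t Ht) as [H2 _]. destruct (HMf t Ht) as [H3 _].
      unfold Rminus. eapply Rle_trans. apply Rabs_triang. rewrite Rabs_Ropp.
      eapply Rle_trans. apply Rplus_le_compat_r. apply Rabs_triang. rewrite Rabs_Ropp.
      eapply Rle_trans. apply Rplus_le_compat_r. apply Rplus_le_compat_r. apply Rabs_triang. rewrite Rabs_Ropp.
      rewrite Rabs_mult. pose proof (Rabs_pos (c * lam)). nra.
    - intros t Ht. pose proof (Hzon t Ht). lra. }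
  assert (Hhk : forall θ, in_chart θ -> h θ = g θ + c * lam * f θ + K1 / lam).
  { intros θ Hθ. pose proof (Hv0 θ). unfold v in H. lra. }
  split.
  - exists (K1 / lam). exact Hhk.
  - intros φ θ t Hθ. unfold velocity. f_equal.
    + f_equal. rewrite (Derive_ext_loc _ (fun y => (g y + c * lam * f y + Y (φ - c * t) y) + K1 / lam)).
      apply Derive_plus_const. apply loc_chart; auto. intros y Hy. rewrite Hhk; auto. ring.
    + f_equal. rewrite !(dphiF m a cc Y HYf). reflexivity.
Qed.
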